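(* Let $X$ be a reflexive complex Banach space and let $A,B$ be positive self-adjoint operators from $X$ to $X^\ast$ with positive lower bound, such that $\operatorname{dom}J_A^\ast\cap\operatorname{dom}J_B^\ast$ is dense in $X$ (so that the form sum $A\dotplus B$ is defined). Let $E$ be a bounded linear operator on $X$ such that $E(\operatorname{dom}A)\subseteq\operatorname{dom}A$, $E(\operatorname{dom}B)\subseteq\operatorname{dom}B$, $E^\ast A\subseteq AE$ and $E^\ast B\subseteq BE$. Then $$E^\ast(A\dotplus B)\subseteq(A\dotplus B)E.$$
   Context: $X^\ast$ denotes the conjugate dual of $X$ (continuous conjugate-linear functionals on $X$); $X$ is identified with $X^{\ast\ast}$. For $v\in X^\ast$, $x\in X$ write $(v,x):=v(x)$ and $(x,v):=\overline{v(x)}$. An operator $A$ from $X$ to $X^\ast$ is positive if $(Ax,x)\ge0$ for all $x\in\operatorname{dom}A$, has positive lower bound if $(Ax,x)\ge\gamma\|x\|^2$ for some $\gamma>0$; its adjoint $A^\ast$ has domain $\{y\in X:x\mapsto(Ax,y)\text{ continuous on }\operatorname{dom}A\}$ and is determined by $(x,A^\ast y)=(Ax,y)$; $A$ is self-adjoint if $A=A^\ast$. For a bounded operator $E$ on $X$, $E^\ast$ is the bounded operator on $X^\ast$ with $(E^\ast v,x)=(v,Ex)$. For positive self-adjoint $A$: $H_A$ is the completion of $\operatorname{ran}A$ with respect to $[Ax,Ay]_A:=(Ax,y)$; $J_A$ is the operator from $H_A$ to $X^\ast$ with $\operatorname{dom}J_A=\operatorname{ran}A$, $J_A(Ax)=Ax$;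 $J_A^\ast$ is the operator from $X$ to $H_A$ with $\operatorname{dom}J_A^\ast=\{y\in X:h\mapsto(J_Ah,y)\text{ continuous on }\operatorname{dom}J_A\}$ and $[h,J_A^\ast y]_A=(J_Ah,y)$. Form sum: $H_{A,B}:=\operatorname{dom}J_A^\ast\cap\operatorname{dom}J_B^\ast$ with inner product $t(x,y)=[J_A^\ast x,J_A^\ast y]_A+[J_B^\ast x,J_B^\ast y]_B$ is a Hilbert space; $A\dotplus B$ has domain $\{x\in H_{A,B}: y\mapsto t(x,y)\text{ continuous on }H_{A,B}\text{ in the norm of }X\}$, and $(A\dotplus B)x$ is the $z\in X^\ast$ with $(z,y)=t(x,y)$ for all $y\in H_{A,B}$. *)

(* Defs.v *)
From HB Require Import structures.
From mathcomp Require Import all_boot all_order all_algebra.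
From mathcomp Require Import all_classical all_reals all_analysis.
From mathcomp.real_closed Require Export complex.
Import Order.TTheory GRing.Theory Num.Theory.
Import numFieldNormedType.Exports.
Local Open Scope classical_set_scope.
Local Open Scope ring_scope.

Set Implicit Arguments.
Unset Strict Implicit.
Unset Printing Implicit Defensive.

Section Defs.
Variable R : realType.
Local Notation C := R[i].
Variable X : completeNormedModType C.

(** Elements of X^* are represented as functions v : X -> C satisfying
    [in_dual]; the pairing is (v,x) := v x and (x,v) := Num.conj (v x). *)
Definition conj_linear (v : X -> C) : Prop :=
  forall (a : C) (x y : X), v (a *: x + y) = (Num.conj a) * v x + v y.

Definition in_dual (v : X -> C) : Prop := conj_linear v /\ continuous (fun x => (v x : C^o)).

(** Reflexivity: the canonical map x |-> (v |-> (x,v) = Num.conj (v x)) from X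
    into X^** (continuous conjugate-linear functionals on X^*, with X^*
    carrying the dual norm) is onto.  A functional Phi on X^* is continuous
    for the dual norm iff it is bounded: |Phi v| <= c ||v||_*; here
    "||v||_* <= M" is written "forall x, |v x| <= M ||x||". *)
Definition bidual_elt (Phi : (X -> C) -> C) : Prop :=
  (forall (a : C) v w, in_dual v -> in_dual w ->
     Phi (fun x => a * v x + w x) = (Num.conj a) * Phi v + Phi w) /\
  (exists c : C, forall v, in_dual v ->
     forall M : C, (forall x, `|v x| <= M * `|x|) -> `|Phi v| <= c * M).

Definition reflexive_space : Prop :=
  forall Phi, bidual_elt Phi -> exists x : X, forall v, in_dual v -> Phi v = Num.conj (v x).

Definition operator (dA : set X) (A : X -> X -> C) : Prop :=
  [/\ dA 0, (forall (a : C) x y, dA x -> dA y -> dA (a *: x + y)),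
      (forall (a : C) x y, dA x -> dA y ->
          A (a *: x + y) = (fun w => a * A x w + A y w)) &
      (forall x, dA x -> in_dual (A x))].

Definition positive_op (dA : set X) (A : X -> X -> C) : Prop :=
  forall x, dA x -> 0 <= A x x.

Definition pos_lower_bound (dA : set X) (A : X -> X -> C) : Prop :=
  exists gamma : C, 0 < gamma /\ forall x, dA x -> gamma * `|x| ^+ 2 <= A x x.

(** Adjoint: dom A^* = {y | x |-> (Ax,y) continuous on dom A},
    and A^* y is the element z of X^* with (x, A^* y) = (Ax, y),
    i.e. (z x)^* = A x y for x in dom A. *)
Definition adj_dom (dA : set X) (A : X -> X -> C) : set X :=
  [set y | {within dA, continuous (fun x => (A x y : C^o))}].

Definition self_adjoint (dA : set X) (A : X -> X -> C) : Prop :=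
  (forall y, dA y <-> adj_dom dA A y) /\
  (forall y, dA y -> in_dual (A y) /\ forall x, dA x -> Num.conj (A y x) = A x y).

(** dom J_A^*: y such that h |-> (J_A h, y) is continuous on ran A for the
    norm of H_A, ||Ax||_A^2 = [Ax,Ax]_A = (Ax,x).  For this linear functional
    continuity is boundedness: |(Ax,y)|^2 <= c (Ax,x). *)
Definition domJ (dA : set X) (A : X -> X -> C) : set X :=
  [set y | exists c : C, forall x, dA x -> `|A x y| ^+ 2 <= c * A x x].

(** The completion H_A, realized by Cauchy sequences in ran A:
    the sequence (A (u n))_n, u n in dom A, is Cauchy for ||.||_A.
    [repJ A u y] says that this Cauchy sequence represents J_A^* y, i.e.
    [Ax, J_A^* y]_A = lim_n [Ax, A (u n)]_A = lim_n (Ax, u n) equals (Ax, y)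
    for every x in dom A. *)
Definition cauchyA (dA : set X) (A : X -> X -> C) (u : nat -> X) : Prop :=
  (forall n, dA (u n)) /\
  (forall eps : C, 0 < eps -> exists N, forall n m, (N <= n)%N -> (N <= m)%N ->
      A (u n - u m) (u n - u m) <= eps).

Definition repJ (dA : set X) (A : X -> X -> C) (u : nat -> X) (y : X) : Prop :=
  cauchyA dA A u /\
  (forall x, dA x -> (fun n => (A x (u n) : C^o)) @ \oo --> (A x y : C^o)).

(** [tA A x y c]: c = [J_A^* x, J_A^* y]_A, computed as the limit of the
    inner products [A (u n), A (w n)]_A = (A (u n), w n) of representing
    Cauchy sequences. *)
Definition tA (dA : set X) (A : X -> X -> C) (x y : X) (c : C) : Prop :=
  exists u w, [/\ repJ dA A u x, repJ dA A w y &
                  (fun n => (A (u n) (w n) : C^o)) @ \oo --> (c : C^o)].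

Definition HAB (dA : set X) (A : X -> X -> C) (dB : set X) (B : X -> X -> C)
  : set X := domJ dA A `&` domJ dB B.

Definition tform (dA : set X) (A : X -> X -> C) (dB : set X) (B : X -> X -> C)
  (x y : X) (c : C) : Prop :=
  exists cA cB, [/\ tA dA A x y cA, tA dB B x y cB & c = cA + cB].

(** Graph of the form sum A \dotplus B: x in dom(A \dotplus B) and
    (A \dotplus B) x = z.  Continuity of y |-> t(x,y) on H_{A,B} w.r.t. the
    norm of X is expressed as boundedness of this linear functional. *)
Definition form_sum (dA : set X) (A : X -> X -> C) (dB : set X) (B : X -> X -> C)
  (x : X) (z : X -> C) : Prop :=
  [/\ HAB dA A dB B x,
      (exists k : C, forall y c, HAB dA A dB B y -> tform dA A dB B x y c ->
          `|c| <= k * `|y|),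
      in_dual z &
      (forall y c, HAB dA A dB B y -> tform dA A dB B x y c -> z y = c)].

Definition dual_op (E : X -> X) (v : X -> C) : X -> C := fun x => v (E x).

End Defs.

(* Main.v *)
Require Import Defs.
From HB Require Import structures.
From mathcomp Require Import all_boot all_order all_algebra.
From mathcomp Require Import all_classical all_reals all_analysis.
From mathcomp.real_closed Require Import complex.
From mathcomp Require Import ring lra zify.
Import Order.TTheory GRing.Theory Num.Theory.
Import numFieldNormedType.Exports.
Local Open Scope classical_set_scope.
Local Open Scope ring_scope.
Set Implicit Arguments.
Unset Strict Implicit.
Unset Printing Implicit Defensive.
Section Basic.
Variable R : realType.
Local Notation C := R[i].
Variable X : completeNormedModType C.
Variables (dA : set X) (A : X -> X -> C).
Hypothesis hop : operator dA A.
Hypothesis hsa : self_adjoint dA A.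
Hypothesis hpos : positive_op dA A.

Lemma dA0 : dA 0. Proof. by case: hop. Qed.
Lemma dAL a x y : dA x -> dA y -> dA (a *: x + y). Proof. by case: hop => _ H _ _; apply: H. Qed.
Lemma dAZ a x : dA x -> dA (a *: x).
Proof. by move=> hx; rewrite -[a *: x]addr0; apply: dAL => //; apply: dA0. Qed.
Lemma dAD x y : dA x -> dA y -> dA (x + y).
Proof. by move=> hx hy; rewrite -[x]scale1r; apply: dAL. Qed.
Lemma dAN x : dA x -> dA (- x).
Proof. by move=> hx; rewrite -scaleN1r; apply: dAZ. Qed.
Lemma dAB x y : dA x -> dA y -> dA (x - y).
Proof. by move=> hx hy; apply: dAD => //; apply: dAN. Qed.

Lemma Ar_dual x : dA x -> in_dual (A x). Proof. by case: hop => _ _ _ H; apply: H. Qed.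
Lemma ArL x a v w : dA x -> A x (a *: v + w) = a^* * A x v + A x w.
Proof. by move=> /Ar_dual [H _]; apply: H. Qed.
Lemma Ar0 x : dA x -> A x 0 = 0.
Proof.
move=> hx; have := ArL 1 0 0 hx; rewrite scale1r addr0 conjC1 mul1r => E.
by apply: (addrI (A x 0)); rewrite addr0 -E.
Qed.
Lemma ArD x v w : dA x -> A x (v + w) = A x v + A x w.
Proof. by move=> hx; rewrite -{1}[v]scale1r ArL // conjC1 mul1r. Qed.
Lemma ArZ x a v : dA x -> A x (a *: v) = a^* * A x v.
Proof. by move=> hx; rewrite -[a *: v]addr0 ArL // (Ar0 hx) addr0. Qed.
Lemma ArN x v : dA x -> A x (- v) = - A x v.
Proof. by move=> hx; rewrite -scaleN1r ArZ // rmorphN1 mulN1r. Qed.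
Lemma ArB x v w : dA x -> A x (v - w) = A x v - A x w.
Proof. by move=> hx; rewrite ArD // ArN. Qed.

Lemma AlL a w x y : dA x -> dA y -> A (a *: x + y) w = a * A x w + A y w.
Proof. by case: hop => _ _ H _ hx hy; rewrite (H a x y hx hy). Qed.
Lemma Al0 w : A 0 w = 0.
Proof.
have h0 := dA0; have := AlL 1 w h0 h0; rewrite scale1r addr0 mul1r => E.
by apply: (addrI (A 0 w)); rewrite addr0 -E.
Qed.
Lemma AlD x y w : dA x -> dA y -> A (x + y) w = A x w + A y w.
Proof. by move=> hx hy; rewrite -{1}[x]scale1r AlL // mul1r. Qed.
Lemma AlZ a x w : dA x -> A (a *: x) w = a * A x w.
Proof. by move=> hx; rewrite -[a *: x]addr0 AlL ?Al0 ?addr0 //; apply: dA0. Qed.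
Lemma AlN x w : dA x -> A (- x) w = - A x w.
Proof. by move=> hx; rewrite -scaleN1r AlZ // mulN1r. Qed.
Lemma AlB x y w : dA x -> dA y -> A (x - y) w = A x w - A y w.
Proof. by move=> hx hy; rewrite AlD ?AlN //; apply: dAN. Qed.

Lemma herm x y : dA x -> dA y -> A x y = (A y x)^*.
Proof. by move=> hx hy; case: hsa => _ /(_ y hy) [_ /(_ x hx) ->]. Qed.
Lemma Qge0 x : dA x -> 0 <= A x x. Proof. exact: hpos. Qed.
Lemma Qreal x : dA x -> (A x x)^* = A x x.
Proof. by move=> hx; rewrite -herm. Qed.

End Basic.

Section CS.
Variable R : realType.
Local Notation C := R[i].
Variable X : completeNormedModType C.
Variables (dA : set X) (A : X -> X -> C).
Hypothesis hop : operator dA A.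
Hypothesis hsa : self_adjoint dA A.
Hypothesis hpos : positive_op dA A.
Hypothesis hlb : pos_lower_bound dA A.

Lemma Q0 y : dA y -> A y y = 0 -> y = 0.
Proof.
move=> hy hQ; case: hlb => g [g0 /(_ y hy)]; rewrite hQ => H.
apply/normr0_eq0/eqP; rewrite -sqrf_eq0 eq_le exprn_ge0 ?andbT //.
by rewrite -(pmulr_rle0 _ g0).
Qed.

Lemma CSineq x y : dA x -> dA y -> `|A x y| ^+ 2 <= A x x * A y y.
Proof.
move=> hx hy.
have [->|y0] := eqVneq y 0.
  rewrite (Ar0 hop hx) normr0 expr0n /=; apply: mulr_ge0; apply: hpos => //.
  exact: dA0 hop.
have Qp : 0 < A y y.
  rewrite lt_def (hpos hy) andbT; apply/eqP => /(Q0 hy) E; by rewrite E eqxx in y0.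
set a := A x y; set Q := A y y.
pose t := - a / Q.
have hty : dA (t *: y) by apply: (dAZ hop).
have := hpos (dAD hop hx hty).
rewrite (AlD hop _ hx hty) !(ArD hop) // ?(dAD hop) // !(AlZ hop) // !(ArZ hop) //.
rewrite -/a -/Q (herm hsa hy hx) -/a.

have -> : t^* = - a^* / Q.
  by rewrite /t rmorphM rmorphN fmorphV /= (Qreal hsa hy).
rewrite /t normCK.
have Q0' : Q != 0 by rewrite gt_eqF.
have -> : A x x + (- a^* / Q * a) + (- a / Q * a^* + - a / Q * (- a^* / Q * Q))
   = A x x - a * a^* / Q.
  by field.
rewrite subr_ge0 ler_pdivrMr //.
Qed.
End CS.

Section Bound.
Variable R : realType.
Local Notation C := R[i].
Variable X : completeNormedModType C.

Lemma cont_bound (V : normedModType C) (f : X -> V) :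
  (forall (a : C) x, `|f (a *: x)| = `|a| * `|f x|) -> continuous f ->
  exists K : C, 0 < K /\ forall x, `|f x| <= K * `|x|.
Proof.
move=> hom hc.
have f0 : f 0 = 0.
  by apply/normr0_eq0; rewrite -(scale0r (0 : X)) hom normr0 mul0r.
have := @cvgr_dist_lt _ _ _ (nbhs (0:X)) (nbhs_filter 0) f (f 0) (hc 0) 1 ltr01.
move=> H0; have [e e0 He] := iffLR (@nbhs_norm0P _ X _) H0.
exists (2 / e); split; first by rewrite divr_gt0.
move=> x; have [->|x0] := eqVneq x 0; first by rewrite f0 !normr0 mulr0.
have nx : 0 < `|x| by rewrite normr_gt0.
pose s := e / (2 * `|x|).
have s0 : 0 < s by rewrite /s divr_gt0 // mulr_gt0.
have nx0 : `|x| != 0 by rewrite gt_eqF.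
have e0' : e != 0 by rewrite gt_eqF.
have : `|s *: x| < e.
  have -> : `|s *: x| = e / 2.
    by rewrite normrZ (gtr0_norm s0) /s; field; rewrite ?nx0 ?e0' //.
  by rewrite ltr_pdivrMr // ltr_pMr // ltr1n.
move/He => /=; rewrite f0 sub0r normrN hom (gtr0_norm s0) => H.
have -> : `|f x| = (s * `|f x|) * (2 * `|x| / e).
  by rewrite /s; field; rewrite ?nx0 ?e0' //.
have h2 : 0 <= 2 * `|x| / e by rewrite ltW // divr_gt0 // mulr_gt0.
apply: le_trans (ler_wpM2r h2 (ltW H)) _.
by rewrite mul1r mulrAC.
Qed.
End Bound.

Section RealLemmas.
Variable R : realType.

Lemma logconv0 (b : nat -> R) (M : R) :
  (forall k, 0 <= b k) -> (forall k, b k.+1 ^+ 2 <= b k * b k.+2) ->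
  (forall k, b k <= M) -> b 1%N <= b 0%N.
Proof.
move=> b0 hcv hM; rewrite leNgt; apply/negP => h10.
have hb0 : 0 < b 0%N.
  rewrite lt_def b0 andbT; apply/eqP => e0.
  have := hcv 0%N; rewrite e0 mul0r => h.
  have := b0 1%N; have : b 1%N > 0 by rewrite -e0.
  move=> p _; have : 0 < b 1%N ^+ 2 by rewrite exprn_gt0.
  by rewrite ltNge h.
pose q := b 1%N / b 0%N.
have q1 : 1 < q by rewrite /q ltr_pdivlMr // mul1r.
have st : forall k, q * b k <= b k.+1 /\ b 0%N <= b k.
  elim=> [|k [ih1 ih2]]; first by rewrite /q mulfVK ?gt_eqF.
  have bk : 0 < b k by apply: lt_le_trans hb0 ih2.
  split; last first.
    apply: le_trans ih2 _; apply: le_trans ih1; nra.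
  have := hcv k => h.
  have : q * b k * b k.+1 <= b k * b k.+2.
    apply: le_trans h; rewrite expr2; apply: ler_wpM2r => //.
  by rewrite mulrAC [b k * _]mulrC ler_pM2r.
have lin : forall k, b 0%N + k%:R * ((q - 1) * b 0%N) <= b k.
  elim=> [|k ih]; first by rewrite mul0r addr0.
  have [s1 s2] := st k.
  apply: le_trans s1; rewrite mulrSr mulrDl addrA.
  nra.
have d0 : 0 < (q - 1) * b 0%N by rewrite mulr_gt0 // subr_gt0.
have M0 : 0 <= M by apply: le_trans (hM 0%N); exact: b0.
have := archi_boundP (divr_ge0 M0 (ltW d0)).
set n := Num.Def.archi_bound _ => hn.
have := lin n; have := hM n.
rewrite ltr_pdivrMr // in hn.
by move=> h1 h2; nra.
Qed.

Lemma logconv (a : nat -> R) (l M : R) : 0 < l ->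
  (forall k, 0 <= a k) -> (forall k, a k.+1 ^+ 2 <= a k * a k.+2) ->
  (forall k, a k <= M * l ^+ k) -> a 1%N <= l * a 0%N.
Proof.
move=> l0 a0 hcv hM.
pose b k := a k / l ^+ k.
have lk : forall k, 0 < l ^+ k by move=> k; rewrite exprn_gt0.
have : b 1%N <= b 0%N.
  apply: (@logconv0 b M).
  - by move=> k; rewrite /b divr_ge0 // ltW.
  - move=> k; rewrite /b.
    have -> : (a k.+1 / l ^+ k.+1) ^+ 2 = a k.+1 ^+ 2 / (l ^+ k * l ^+ k.+2).
      rewrite -!exprD expr_div_n -exprM; congr (_ / l ^+ _); lia.
    have -> : a k / l ^+ k * (a k.+2 / l ^+ k.+2) = (a k * a k.+2) / (l ^+ k * l ^+ k.+2).
      by rewrite mulf_div.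
    by rewrite ler_pM2r // invr_gt0 mulr_gt0.
  - by move=> k; rewrite /b ler_pdivrMr.
by rewrite /b expr1 expr0 divr1 ler_pdivrMr // mulrC.
Qed.
End RealLemmas.

Lemma RC (R : realType) (z : R[i]) : 0 <= z -> z = ((@complex.Re R z)%:C)%C.
Proof. by move=> h; rewrite {1}[z]complexE (ger0_Im h) mulr0 addr0. Qed.

Section Mbound.
Variable R : realType.
Local Notation C := R[i].
Variable X : completeNormedModType C.
Variables (dA : set X) (A : X -> X -> C).
Hypothesis hop : operator dA A.
Hypothesis hsa : self_adjoint dA A.
Hypothesis hpos : positive_op dA A.
Hypothesis hlb : pos_lower_bound dA A.
Variable E : X -> X.
Hypothesis hElin : forall (a : C) (x y : X), E (a *: x + y) = a *: E x + E y.
Hypothesis hEc : continuous E.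
Hypothesis hE : forall x, dA x -> dA (E x) /\ A (E x) = dual_op E (A x).

Lemma E0 : E 0 = 0.
Proof.
have := hElin 1 0 0; rewrite !scale1r addr0 => e.
by apply: (addrI (E 0)); rewrite addr0 -e.
Qed.
Lemma EZ a x : E (a *: x) = a *: E x.
Proof. by rewrite -[a *: x]addr0 hElin E0 addr0. Qed.
Lemma ED x y : E (x + y) = E x + E y.
Proof. by rewrite -{1}[x]scale1r hElin scale1r. Qed.
Lemma EB x y : E (x - y) = E x - E y.
Proof. by rewrite ED -scaleN1r EZ scaleN1r. Qed.
Lemma dAE x : dA x -> dA (E x). Proof. by move/hE => []. Qed.
Lemma AE v w : dA v -> A (E v) w = A v (E w).
Proof. by move=> hv; rewrite (hE hv).2. Qed.

Lemma Ebound : exists L : C, 0 < L /\ forall x, `|E x| <= L * `|x|.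
Proof. by apply: cont_bound => // a x; rewrite EZ normrZ. Qed.

Lemma dual_bound (v : X -> C) : in_dual v ->
  exists K : C, 0 < K /\ forall x, `|v x| <= K * `|x|.
Proof.
move=> [hl hc].
have v0 : v 0 = 0.
  have := hl 1 0 0; rewrite scale1r addr0 conjC1 mul1r => e.
  by apply: (addrI (v 0)); rewrite addr0 -e.
apply: (@cont_bound _ _ C^o (fun x => v x : C^o)) => // a x.
by rewrite -[a *: x]addr0 hl v0 addr0 normrM norm_conjC.
Qed.

Lemma Mbound : exists L : C, 0 < L /\ forall x, dA x -> A (E x) (E x) <= L * A x x.
Proof.
have [L [L0 HL]] := Ebound.
exists (L ^+ 2); split; first by rewrite exprn_gt0.
move=> x hx.
have [K [K0 HK]] := dual_bound (Ar_dual hop hx).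
pose e k := iter k E x.
have he : forall k, dA (e k) by elim=> [|k ih] //=; apply: dAE.
have hAe : forall k w, A (e k) w = A x (iter k E w).
  elim=> [|k ih] w //; rewrite /= AE; [by rewrite ih -iterSr | exact: he k].
pose a k := A (e k) (e k).
have a0 : forall k, 0 <= a k by move=> k; apply: hpos.
have ae : forall k, a k = A x (e (k + k)%N) by move=> k; rewrite /a hAe /e iterD.
have acv : forall k, a k.+1 ^+ 2 <= a k * a k.+2.
  move=> k; have := CSineq hop hsa hpos hlb (he k) (he k.+2).
  have -> : A (e k) (e k.+2) = a k.+1.
    by rewrite hAe ae /e -iterD; congr (A x (iter _ E x)); lia.
  by rewrite ger0_norm.
have itb : forall n, `|e n| <= L ^+ n * `|x|.
  elim=> [|n ih]; first by rewrite expr0 mul1r.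
  rewrite /e iterS; apply: le_trans (HL _) _.
  by rewrite exprS -mulrA ler_pM2l.
have abd : forall k, a k <= K * `|x| * (L ^+ 2) ^+ k.
  move=> k; rewrite -(ger0_norm (a0 k)) ae; apply: le_trans (HK _) _.
  rewrite -mulrA ler_pM2l // mulrC -exprM.
  have -> : (2 * k = k + k)%N by lia.
  exact: itb.
have Lr : (L ^+ 2) = ((complex.Re (L ^+ 2))%:C)%C by apply: RC; rewrite ltW // exprn_gt0.
have Kr : (K * `|x|) = ((complex.Re (K * `|x|))%:C)%C by apply: RC; rewrite mulr_ge0 // ltW.
have ar : forall k, a k = ((complex.Re (a k))%:C)%C by move=> k; apply: RC.
have h : complex.Re (a 1%N) <= complex.Re (L ^+ 2) * complex.Re (a 0%N).
  apply: (@logconv R (fun k => complex.Re (a k)) (complex.Re (L ^+ 2))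
   (complex.Re (K * `|x|))).
- by rewrite -ltcR -Lr exprn_gt0.
- by move=> k; rewrite -lecR -ar.
- by move=> k; rewrite -lecR !rmorphM /= -!ar -expr2; exact: acv.
- by move=> k; rewrite -lecR !rmorphM /= rmorphXn /= -!ar -Lr -Kr.
move: h; rewrite -lecR rmorphM /= -!ar -Lr.
by rewrite /a /e /=.
Qed.
End Mbound.

Lemma RCr (R : realType) (z : R[i]) : z^* = z -> z = ((@complex.Re R z)%:C)%C.
Proof.
move=> h; have : z \is Num.real by rewrite CrealE h.
by case/complex_realP => k ->.
Qed.

Lemma Re_le_norm (R : realType) (z : R[i]) : complex.Re z <= complex.Re `|z|.
Proof.
case: z => a b; rewrite normc_def /=.
apply: le_trans (ler_norm a) _; rewrite -sqrtr_sqr.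
by apply: ler_wsqrtr; rewrite lerDl sqr_ge0.
Qed.

Lemma ReJ (R : realType) (z : R[i]) : complex.Re z^* = complex.Re z.
Proof. by case: z. Qed.

Lemma inv_le (R : realType) (N n : nat) : (N <= n)%N -> (n.+1%:R)^-1 <= (N.+1%:R)^-1 :> R.
Proof. by move=> h; rewrite lef_pV2 ?posrE ?ltr0n // ler_nat. Qed.

Lemma archC (R : realType) (e : R) : 0 < e -> exists N : nat, (N.+1%:R)^-1 < e.
Proof.
move=> e0; have hi : 0 <= e^-1 by rewrite invr_ge0 ltW.
have := archi_boundP hi.
set N := Num.Def.archi_bound _ => h; exists N.
rewrite -[e]invrK ltf_pV2 ?posrE ?ltr0n ?invr_gt0 //.
by apply: lt_trans h _; rewrite ltr_nat.
Qed.

Section Riesz.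
Variable R : realType.
Local Notation C := R[i].
Local Notation Re := (@complex.Re R).
Variable X : completeNormedModType C.
Variables (dA : set X) (A : X -> X -> C).
Hypothesis hop : operator dA A.
Hypothesis hsa : self_adjoint dA A.
Hypothesis hpos : positive_op dA A.
Hypothesis hlb : pos_lower_bound dA A.

Lemma domJ_c y : domJ dA A y ->
  exists c : C, 0 <= c /\ forall v, dA v -> `|A v y| ^+ 2 <= c * A v v.
Proof.
case=> c hc; exists `|c|; split => // v hv.
have [hQ0|Qn] := eqVneq (A v v) 0.
  have -> := Q0 hlb hv hQ0.
  rewrite (Al0 hop) normr0 expr0n /=; apply: mulr_ge0 => //; apply: hpos; exact: dA0 hop.
have Qp : 0 < A v v by rewrite lt_def Qn hpos.
have h := hc v hv.
have c0 : 0 <= c.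
  by rewrite -(pmulr_lge0 _ Qp); apply: le_trans h; rewrite exprn_ge0.
by rewrite (ger0_norm c0).
Qed.


Lemma conj_half : (2^-1 : C)^* = 2^-1.
Proof. by rewrite fmorphV /= conjC_nat. Qed.


Definition Jf y w := A w w - A w y - (A w y)^*.

Lemma J_expand y u v t : dA u -> dA v ->
  Jf y (u + t *: v) = Jf y u + t * (A v u - A v y) + (t * (A v u - A v y))^*
     + t * t^* * A v v.
Proof.
move=> hu hv; have htv : dA (t *: v) by apply: (dAZ hop).
rewrite /Jf (AlD hop _ hu htv) !(ArD hop) // !(AlD hop) // !(AlZ hop) //.
rewrite !(ArZ hop) // (herm hsa hu hv) !rmorphD !rmorphM !rmorphB /=.
ring.
Qed.

Lemma J_par y p q : dA p -> dA q ->
  A (p - q) (p - q) = 2 * Jf y p + 2 * Jf y q - 4 * Jf y (2^-1 *: (p + q)).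
Proof.
move=> hp hq; have hpq : dA (p + q) by apply: (dAD hop).
rewrite /Jf (AlB hop _ hp hq) !(ArB hop) // !(AlZ hop) // !(ArZ hop) //.
rewrite !(AlD hop) // !(ArD hop) // ?rmorphD !rmorphM /= ?rmorphD conj_half.
field; rewrite ?pnatr_eq0 //.
Qed.

Lemma cvgE (s : nat -> C) (l : C) :
  (fun n => (s n : C^o)) @ \oo --> (l : C^o) <->
  (forall eps : C, 0 < eps -> exists N, forall n, (N <= n)%N -> `|l - s n| <= eps).
Proof.
split.
  move=> /cvgrPdist_le H eps He; have := H eps He.
  by case=> N _ HN; exists N => n hn; apply: HN.
move=> H; apply/cvgrPdist_le => eps He; have [N HN] := H eps He.
by exists N => // n hn; apply: HN.
Qed.

Lemma conjR (k : R) : ((k%:C)%C)^* = (k%:C)%C :> C.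
Proof. exact: conjc_real. Qed.

Lemma Re_natM (n : nat) (z : C) : Re (n%:R * z) = n%:R * Re z.
Proof. by rewrite !mulr_natl raddfMn. Qed.

Lemma repr_exists y : domJ dA A y -> exists u, repJ dA A u y.
Proof.
move=> hy.
have [c [c0 hc]] := domJ_c hy.
pose Jr v := Re (Jf y v).
have Jreal : forall v, dA v -> Jf y v = (Jr v)%:C%C.
  move=> v hv; apply: RCr.
  by rewrite /Jf !rmorphB /= conjCK (Qreal hsa hv) addrAC.
have Jlb : forall v, dA v -> - Re c <= Jr v.
  move=> v hv.
  have e1 : Jr v = Re (A v v) - 2 * Re (A v y).
    rewrite /Jr /Jf !raddfB /= ReJ; lra.
  have hQ := hpos hv.
  have h1 := hc v hv.
  have h2 := Re_le_norm (A v y).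
  rewrite (RC hQ) (RC c0) (RC (normr_ge0 (A v y))) -rmorphXn -rmorphM lecR in h1.
  have p0 : 0 <= Re `|A v y| by rewrite -ler0c -RC.
  have Q0r : 0 <= Re (A v v) by rewrite -ler0c -RC.
  have c0r : 0 <= Re c by rewrite -ler0c -RC.
  set p := Re `|A v y| in h1 h2 p0 *; set Q := Re (A v v) in h1 Q0r e1 *.
  set cr := Re c in h1 c0r *.
  have h3 : 2 * p <= Q + cr.
    rewrite -(@ler_pXn2r _ 2) // ?nnegrE ?mulr_ge0 ?addr_ge0 //.
    have : 0 <= (Q - cr) ^+ 2 by rewrite sqr_ge0.
    nra.
  rewrite e1; nra.
pose S := [set Jr v | v in dA].
have hS : has_inf S.
  split; first by exists (Jr 0); exists 0 => //; apply: dA0 hop.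
  by exists (- Re c) => _ [v hv <-]; apply: Jlb.
pose m := inf S.
have Jm : forall v, dA v -> m <= Jr v.
  by move=> v hv; apply: (ge_inf hS.2); exists v.
have : forall n : nat, exists v, dA v /\ Jr v < m + (n.+1%:R)^-1.
  move=> n; have e0 : 0 < (n.+1%:R : R)^-1 by rewrite invr_gt0 ltr0Sn.
  have [_ [v hv <-] hlt] := inf_adherent e0 hS.
  by exists v.
case/choice => u hu.
have Jp : forall n k, Re (A (u n - u k) (u n - u k)) <= 2 * (n.+1%:R)^-1 + 2 * (k.+1%:R)^-1.
  move=> n k; have [hn1 hn2] := hu n; have [hk1 hk2] := hu k.
  have hs : dA (2^-1 *: (u n + u k)) by apply: (dAZ hop); apply: (dAD hop).
  have := Jm _ hs.
  rewrite (J_par y hn1 hk1) !raddfB !raddfD /= !Re_natM -/(Jr _) -/(Jr _) -/(Jr _).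
  move=> h; move: hn2 hk2; move: (Jr (u n)) (Jr (u k)) (Jr _) h => a b c' h3 h1 h2.
  clearbody m; move: (n.+1%:R^-1 : R) (k.+1%:R^-1 : R) => en ek in h1 h2 *; lra.
exists u; split; first split.
- by move=> n; case: (hu n).
- move=> eps e0.
  have er : eps = (Re eps)%:C%C by apply: RC; apply: ltW.
  have e0r : 0 < Re eps by rewrite -ltcR -er.
  have [N hN] := archC (divr_gt0 e0r (ltr0n R 4)).
  exists N => n k hn hk.
  have hnk : dA (u n - u k) by apply: (dAB hop); [case: (hu n) | case: (hu k)].
  rewrite (RC (hpos hnk)) er lecR; apply: le_trans (Jp n k) _.
  have := inv_le R hn; have := inv_le R hk.
  move: hN; move: (n.+1%:R^-1 : R) (k.+1%:R^-1 : R) (N.+1%:R^-1 : R) => a b d.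
  move=> h1 h2 h3; lra.
move=> v hv; apply/cvgE => eps e0.
have er : eps = (Re eps)%:C%C by apply: RC; apply: ltW.
have e0r : 0 < Re eps by rewrite -ltcR -er.
have Qv : A v v = (Re (A v v))%:C%C by apply: RC; apply: hpos.
have Qv0 : 0 <= Re (A v v) by rewrite -ler0c -Qv; apply: hpos.
set q := Re (A v v) in Qv Qv0.
have q1 : 0 < q + 1 by lra.
have [N hN] := archC (divr_gt0 (mulr_gt0 e0r e0r) q1).
exists N => n hn.
have [hu1 hu2] := hu n.
pose d := A v (u n) - A v y.
have nd : `|d| = (Re `|d|)%:C%C by apply: RC.
have nd0 : 0 <= Re `|d| by rewrite -ler0c -nd.
set r := Re `|d| in nd nd0.
pose s := (q + 1)^-1.
have s0 : 0 < s by rewrite invr_gt0.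
have sq : s * (q + 1) = 1 by rewrite mulVf ?gt_eqF.
pose t := - (s%:C)%C * d^*.
have ht : dA (u n + t *: v) by apply: (dAD hop) => //; apply: (dAZ hop).
have key : Jr (u n + t *: v) = Jr (u n) - 2 * s * r ^+ 2 + s ^+ 2 * r ^+ 2 * q.
  apply: complexI; rewrite -Jreal // J_expand // Jreal // Qv -/d.
  have hz : d^* * d = (r%:C)%C ^+ 2 by rewrite -nd normCKC.
  clearbody d.
  rewrite /t !rmorphM !rmorphN /= conjCK conjR.
  rewrite [LHS](_ : _ = (Jr (u n))%:C%C - 2 * (s%:C)%C * (d^* * d)
       + (s%:C)%C ^+ 2 * (d^* * d) * (q%:C)%C); last by ring.
  rewrite hz ?rmorphD ?rmorphB ?rmorphN ?rmorphM ?rmorphXn rmorph_nat.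
  ring.
have := Jm _ ht; rewrite key => hm.
have hr : r ^+ 2 < (n.+1%:R)^-1 * (q + 1).
  have := inv_le R hn.
  move: hm hu2 hN; move: (n.+1%:R^-1 : R) (N.+1%:R^-1 : R) (Jr (u n)) => a b j.
  clearbody m s. move=> h1 h2 h3 h4.
  have sq' : s * q = 1 - s by rewrite -sq; ring.
  have e : s ^+ 2 * r ^+ 2 * q = s * r ^+ 2 - s ^+ 2 * r ^+ 2.
    by rewrite -[s * r ^+ 2]mulr1 -{1}(subrK s 1) -sq'; ring.
  have p2 : 0 <= s ^+ 2 * r ^+ 2 by rewrite mulr_ge0 ?sqr_ge0.
  have h5 : s * r ^+ 2 < a by lra.
  have -> : r ^+ 2 = s * r ^+ 2 * (q + 1) by rewrite mulrAC sq mul1r.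
  by rewrite ltr_pM2r.
have hr2 : r < Re eps.
  rewrite ltr_pdivlMr // in hN.
  have := inv_le R hn.
  move: hN hr; move: (n.+1%:R^-1 : R) (N.+1%:R^-1 : R) => a b.
  move=> h1 h2 h3; nra.
rewrite -[A v y - _]opprB normrN -/d nd er lecR; exact: ltW.
Qed.

Lemma Qpar_eq a b : dA a -> dA b ->
  A (a + b) (a + b) = 2 * A a a + 2 * A b b - A (a - b) (a - b).
Proof.
move=> ha hb; have hab : dA (a + b) by apply: (dAD hop).
rewrite (AlD hop _ ha hb) (AlB hop _ ha hb) !(ArD hop) // !(ArN hop) //; ring.
Qed.

Lemma Qpar a b : dA a -> dA b -> A (a + b) (a + b) <= 2 * A a a + 2 * A b b.
Proof.
move=> ha hb; rewrite Qpar_eq // gerBl; apply: hpos; exact: (dAB hop).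
Qed.

Lemma QN a : dA a -> A (- a) (- a) = A a a.
Proof. by move=> ha; rewrite (AlN hop) // (ArN hop) // opprK. Qed.

Lemma QparB a b : dA a -> dA b -> A (a - b) (a - b) <= 2 * A a a + 2 * A b b.
Proof.
by move=> ha hb; rewrite -(QN hb); apply: Qpar => //; apply: (dAN hop).
Qed.

Lemma sqrt_le (a b : C) : 0 <= a -> 0 <= b -> a ^+ 2 <= b ^+ 2 -> a <= b.
Proof. by move=> a0 b0; rewrite ler_pXn2r // nnegrE. Qed.

Lemma U (x : X) p q w c :
  repJ dA A p x -> repJ dA A q x -> cauchyA dA A w ->
  (fun n => A (q n) (w n) : C^o) @ \oo --> (c : C^o) ->
  (fun n => A (p n) (w n) : C^o) @ \oo --> (c : C^o).
Proof.
move=> [[hp cp] lp] [[hq cq] lq] [hw cw] /cvgE hcq.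
apply/cvgE => eps e0.
pose r n := p n - q n.
have hr : forall n, dA (r n) by move=> n; apply: (dAB hop).
have [N0 hN0] := cp 1 ltr01; have [N1 hN1] := cq 1 ltr01.
pose N := maxn N0 N1.
have bp : forall n, (N <= n)%N -> A (p n) (p n) <= 2 * 1 + 2 * A (p N) (p N).
  move=> n hn; rewrite -[p n](subrK (p N)).
  apply: le_trans (Qpar (dAB hop (hp n) (hp N)) (hp N)) _.
  rewrite lerD2r ler_pM2l //; apply: hN0; [exact: leq_trans (leq_maxl N0 N1) hn | exact: leq_maxl].
have bq : forall n, (N <= n)%N -> A (q n) (q n) <= 2 * 1 + 2 * A (q N) (q N).
  move=> n hn; rewrite -[q n](subrK (q N)).
  apply: le_trans (Qpar (dAB hop (hq n) (hq N)) (hq N)) _.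
  rewrite lerD2r ler_pM2l //; apply: hN1; [exact: leq_trans (leq_maxr N0 N1) hn | exact: leq_maxr].
pose B := 2 * (2 * 1 + 2 * A (p N) (p N)) + 2 * (2 * 1 + 2 * A (q N) (q N)).
have B0 : 0 < B.
  rewrite /B ltr_pwDl // ?mulr_gt0 ?ltr_pwDl ?mulr_ge0 ?addr_ge0 ?mulr_ge0 ?hpos //.
have hB : forall n, (N <= n)%N -> A (r n) (r n) <= B.
  move=> n hn; apply: le_trans (QparB (hp n) (hq n)) _.
  by rewrite lerD // ler_pM2l // ?bp ?bq.
pose e4 := eps / 4.
have e40 : 0 < e4 by rewrite divr_gt0.
pose dl := e4 ^+ 2 / B.
have dl0 : 0 < dl by rewrite divr_gt0 // exprn_gt0.
have [M0 hM0] := cw dl dl0.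
pose M := maxn N M0.
have [Np hNp] := (iffLR (cvgE _ _) (lp (w M) (hw M))) e4 e40.
have [Nq hNq] := (iffLR (cvgE _ _) (lq (w M) (hw M))) e4 e40.
have [Nc hNc] := hcq e4 e40.
exists (maxn (maxn M Nc) (maxn Np Nq)) => n hn.
have hMn : (M <= n)%N by move: hn; lia.
have hNn : (N <= n)%N by move: hMn; rewrite /M; lia.
have hM0n : (M0 <= n)%N by move: hMn; rewrite /M; lia.
have hcn : (Nc <= n)%N by move: hn; lia.
have hpn : (Np <= n)%N by move: hn; lia.
have hqn : (Nq <= n)%N by move: hn; lia.
apply: le_trans (ler_distD (A (q n) (w n)) _ _) _.
have -> : A (q n) (w n) - A (p n) (w n) = - A (r n) (w n) by rewrite (AlB hop) // opprB.
rewrite normrN.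
have e1 : `|A (r n) (w n - w M)| <= e4.
  apply: sqrt_le => //; first exact: ltW.
  apply: le_trans (CSineq hop hsa hpos hlb (hr n) (dAB hop (hw n) (hw M))) _.
  have hdl : A (w n - w M) (w n - w M) <= dl.
    apply: hM0 => //; rewrite /M; lia.
  apply: le_trans (ler_wpM2r (hpos (dAB hop (hw n) (hw M))) (hB n hNn)) _.
  apply: le_trans (ler_wpM2l (ltW B0) hdl) _.
  by rewrite /dl mulrC mulfVK ?gt_eqF.
have e2 : `|A (r n) (w M)| <= e4 + e4.
  rewrite (herm hsa (hr n) (hw M)) norm_conjC /r (ArB hop) //.
  rewrite -[A (w M) (p n) - _](subrKA (A (w M) x)).
  apply: le_trans (ler_normD _ _) _; apply: lerD.
    by rewrite -normrN opprB; apply: hNp.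
  by apply: hNq.
have e3 : `|c - A (q n) (w n)| <= e4 by apply: hNc.
have -> : A (r n) (w n) = A (r n) (w n - w M) + A (r n) (w M).
  by rewrite -(ArD hop) ?subrK.
apply: le_trans (lerD e3 (le_trans (ler_normD _ _) (lerD e1 e2))) _.
have -> : e4 + (e4 + (e4 + e4)) = eps by rewrite /e4; field.
by [].
Qed.

End Riesz.

Section Final.
Variable R : realType.
Local Notation C := R[i].
Variable X : completeNormedModType C.
Variables (dA : set X) (A : X -> X -> C).
Hypothesis hop : operator dA A.
Hypothesis hsa : self_adjoint dA A.
Hypothesis hpos : positive_op dA A.
Hypothesis hlb : pos_lower_bound dA A.
Variable E : X -> X.
Hypothesis hElin : forall (a : C) (x y : X), E (a *: x + y) = a *: E x + E y.
Hypothesis hEc : continuous E.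
Hypothesis hE : forall x, dA x -> dA (E x) /\ A (E x) = dual_op E (A x).

Lemma domJ_E y : domJ dA A y -> domJ dA A (E y).
Proof.
move=> hy.
have [L [L0 HL]] := Mbound hop hsa hpos hlb hElin hEc hE.
have [c [c0 hc]] := domJ_c hop hpos hlb hy.
exists (c * L) => v hv.
rewrite -(AE hE _ hv); apply: le_trans (hc _ (dAE hE hv)) _.
by rewrite -mulrA ler_wpM2l // HL.
Qed.

Lemma repJ_E u y : repJ dA A u y -> repJ dA A (fun n => E (u n)) (E y).
Proof.
move=> [[hu cu] lu].
have [L [L0 HL]] := Mbound hop hsa hpos hlb hElin hEc hE.
split; first split.
- by move=> n; apply: (dAE hE).
- move=> eps e0.
  have [N hN] := cu (eps / L) (divr_gt0 e0 L0).
  exists N => n m hn hm.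
  rewrite -(EB hElin); apply: le_trans (HL _ (dAB hop (hu n) (hu m))) _.
  by rewrite -ler_pdivlMl // mulrC hN.
- move=> v hv.
  have := lu (E v) (dAE hE hv).
  rewrite (AE hE _ hv).
  have -> : (fun n => A (E v) (u n)) = (fun n => A v (E (u n))).
    by apply: funext => n; rewrite (AE hE _ hv).
  by [].
Qed.

Lemma keyA x y c : domJ dA A x -> tA dA A (E x) y c -> tA dA A x (E y) c.
Proof.
move=> hx [u' [w [ru' rw hc]]].
have [u ru] := repr_exists hop hsa hpos hlb hx.
exists u, (fun n => E (w n)); split; [exact: ru | exact: repJ_E rw | ].
have -> : (fun n => A (u n) (E (w n)) : C^o) = (fun n => A (E (u n)) (w n)).
  by apply: funext => n; rewrite (AE hE _ (ru.1.1 n)).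
apply: (U hop hsa hpos hlb (repJ_E ru) ru' rw.1 hc).
Qed.
End Final.

Unset Implicit Arguments.
Set Strict Implicit.

Theorem theorem5 (R : realType) (X : completeNormedModType R[i])
  (dA : set X) (A : X -> X -> R[i]) (dB : set X) (B : X -> X -> R[i])
  (E : X -> X) :
  reflexive_space X ->
  operator dA A -> positive_op dA A -> self_adjoint dA A ->
  pos_lower_bound dA A ->
  operator dB B -> positive_op dB B -> self_adjoint dB B ->
  pos_lower_bound dB B ->
  dense (HAB dA A dB B) ->
  (forall (a : R[i]) (x y : X), E (a *: x + y) = a *: E x + E y) ->
  continuous E ->
  (forall x, dA x -> dA (E x)) ->
  (forall x, dB x -> dB (E x)) ->
  (forall x, dA x -> dA (E x) /\ A (E x) = dual_op E (A x)) ->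
  (forall x, dB x -> dB (E x) /\ B (E x) = dual_op E (B x)) ->
  forall (x : X) (z : X -> R[i]),
    form_sum dA A dB B x z -> form_sum dA A dB B (E x) (dual_op E z).
Proof.
move=> _ hopA hposA hsaA hlbA hopB hposB hsaB hlbB _ hElin hEc _ _ hEA hEB x z.
case=> [[hxA hxB] _ hz hzv].
have key : forall y c, HAB dA A dB B y -> tform dA A dB B (E x) y c ->
    HAB dA A dB B (E y) /\ z (E y) = c.
  move=> y c [hyA hyB] [cA [cB [hA hB ->]]].
  have hEy : HAB dA A dB B (E y).
    by split; [apply: (domJ_E hopA hsaA hposA hlbA hElin hEc hEA)
              | apply: (domJ_E hopB hsaB hposB hlbB hElin hEc hEB)].
  split; first exact: hEy.
  apply: hzv; first exact: hEy.
  exists cA, cB; split.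
  - exact: (keyA hopA hsaA hposA hlbA hElin hEc hEA hxA hA).
  - exact: (keyA hopB hsaB hposB hlbB hElin hEc hEB hxB hB).
  - by [].
have [L [L0 HL]] := Ebound hElin hEc.
have [Kz [Kz0 HKz]] := dual_bound hz.
split.
- split.
    exact: (domJ_E hopA hsaA hposA hlbA hElin hEc hEA).
  exact: (domJ_E hopB hsaB hposB hlbB hElin hEc hEB).
- exists (Kz * L) => y c hy hc.
  have [_ <-] := key y c hy hc.
  apply: le_trans (HKz _) _; rewrite -mulrA ler_pM2l //.
- split.
    by move=> a u v; rewrite /dual_op hElin; apply: hz.1.
  move=> t; exact: (continuous_comp (hEc t) (hz.2 (E t))).
- by move=> y c hy hc; have [_ <-] := key y c hy hc.
Qed.
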